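(* Let $F|R$ be an extension of ordered fields with canonical valuation $v$, and let $\tilde\iota:\mathcal C(R)\to\mathcal C(F)$ be any map constructed as follows: for a non-ball cut $C=(D,E)$ of $R$, $\tilde\iota(C)$ is one of $D^{+}_F$ or $E^{-}_F$; if $C$ is the lower edge $B_0^-$ (resp. upper edge $B_0^+$) in $R$ of a ball $B_0\neq R$ with ball complement $(D,E)$ in $R$, then $\tilde\iota(C)=D^{+}_F$ (resp. $E^{-}_F$); and $\tilde\iota((\emptyset,R))=R^{-}_F$, $\tilde\iota((R,\emptyset))=R^{+}_F$. If $vR$ is cofinal in $vF$, then $\tilde\iota$ sends principal cuts of $R$ to principal cuts of $F$. Otherwise, no principal cut of $R$ is sent to a principal cut of $F$.
   Context: The canonical valuation $v$ of an ordered field has as valuation ring the convex hull of $\mathbb Z$; $vR\subseteq vF$ are the value groups. For a totally ordered set $T$, a cut is a pair $(D,E)$ with $D<E$ and $D\cup E=T$; $\mathcal C(T)$ is the set of cuts. A cut is principal if $D$ has a last element or $E$ has a first element. For nonempty $A\subseteq T$, $A^+=(D,T\setminus D)$ with $D$ the smallest initial segment containing $A$, and $A^-=(T\setminus E,E)$ with $E$ the smallest final segment containing $A$; for $A\subseteq R$, $A^{\pm}_F$ denote these cuts taken in $F$. For an ordered field $K$, $a\in K$ and a final segment $S$ of $vK$ (possibly empty), $B_S(a,K)=\{b\in K\mid v(a-b)\in S\cup\{\infty\}\}$ is a ball. A ball complement of a ball $B$ is a pair $(D,E)$ with $D<B<E$ and $D\cup B\cup E=K$. A cut is a ball cut if it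 equals $B^+$ (upper edge) or $B^-$ (lower edge) of some ball $B$, otherwise it is a non-ball cut. *)

(* Defs.v *)
From HB Require Import structures.
From mathcomp Require Import all_boot all_order all_algebra.
From mathcomp Require Import boolp classical_sets.
Set Implicit Arguments. Unset Strict Implicit. Unset Printing Implicit Defensive.
Import Order.TTheory GRing.Theory Num.Theory.
Local Open Scope ring_scope.
Local Open Scope classical_set_scope.

(* A cut (D,E) is represented by its lower part D, an initial segment; E = ~` D. *)
Definition is_cut (K : realFieldType) (D : set K) : Prop :=
  forall x y : K, D y -> x <= y -> D x.

Definition principal_cut (K : realFieldType) (D : set K) : Prop :=
  (exists m, D m /\ forall x, D x -> x <= m) \/
  (exists m, ~ D m /\ forall x, ~ D x -> m <= x).

(* lower part of A^+ : the smallest initial segment containing A *)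
Definition cut_up (K : realFieldType) (A : set K) : set K :=
  [set x | exists2 a, A a & x <= a].

(* lower part of A^- : complement of the smallest final segment containing A *)
Definition cut_down (K : realFieldType) (A : set K) : set K :=
  ~` [set x | exists2 a, A a & a <= x].

Definition val_ring (K : realFieldType) : set K :=
  [set x | exists n : nat, `|x| <= n%:R].

(* vle x y  <->  v x <= v y  (i.e. y/x in the valuation ring; v 0 = oo) *)
Definition vle (K : realFieldType) (x y : K) : Prop :=
  exists n : nat, `|y| <= n%:R * `|x|.

(* A final segment S of vK, represented by the set of nonzero elements whose
   value lies in S (a set of nonzero elements closed upward under vle). *)
Definition vfinal (K : realFieldType) (S : set K) : Prop :=
  forall x y : K, x != 0 -> y != 0 -> S x -> vle x y -> S y.

(* B_S(a,K) = {b | v(a-b) in S \cup {oo}} *)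
Definition ball (K : realFieldType) (S : set K) (a : K) : set K :=
  [set b | b = a \/ (a - b != 0 /\ S (a - b))].

Definition is_ball (K : realFieldType) (B : set K) : Prop :=
  exists S a, vfinal S /\ B = ball S a.

Definition ball_complement (K : realFieldType) (B D E : set K) : Prop :=
  (forall d b, D d -> B b -> d < b) /\
  (forall b e, B b -> E e -> b < e) /\
  (forall d e, D d -> E e -> d < e) /\
  (forall x, D x \/ B x \/ E x).

Definition ball_cut (K : realFieldType) (C : set K) : Prop :=
  exists B, is_ball B /\ (C = cut_up B \/ C = cut_down B).

Definition val_cofinal (R F : realFieldType) (i : R -> F) : Prop :=
  forall y : F, y != 0 -> exists x : R, x != 0 /\ vle y (i x).

(* Main.v *)
Require Import Defs.
From HB Require Import structures.
From mathcomp Require Import all_boot all_order all_algebra.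
From mathcomp Require Import boolp classical_sets.
From mathcomp Require Import lra.
Import Order.TTheory GRing.Theory Num.Theory.
Local Open Scope ring_scope.
Local Open Scope classical_set_scope.

Set Implicit Arguments.
Section Aux.
Variables (R F : realFieldType) (i : {rmorphism R -> F}).
Hypothesis i_mono : {mono i : x y / x <= y}.

Lemma i_lt : {mono i : x y / x < y}.
Proof. exact: leW_mono. Qed.

Lemma i_half a b : i ((a + b) / 2) = (i a + i b) / 2.
Proof. by rewrite fmorph_div rmorphD rmorph_nat. Qed.

Lemma cofA : val_cofinal i -> forall z, 0 < z -> exists2 r, 0 < r & i r <= z.
Proof.
move=> cof z z0.
have [x [x0 [n hn]]] := cof z (lt0r_neq0 z0).
have ax0 : 0 < `|x| by rewrite normr_gt0.
have iax : i `|x| = `|i x|.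
  case: (lerP 0 x) => hx.
    by rewrite !ger0_norm // -(rmorph0 i) i_mono.
  by rewrite !ltr0_norm ?rmorphN // -(rmorph0 i) i_lt.
have iax0 : 0 < i `|x| by rewrite -(rmorph0 i) i_lt.
have n0 : 0 < (n%:R : F).
  rewrite ltr0n lt0n; apply/negP => /eqP n0; move: hn; rewrite n0 mul0r -iax => h.
  lra.
have n0' : 0 < (n%:R : R) by rewrite ltr0n -(ltr0n F).
exists (`|x| / n%:R); first by rewrite divr_gt0.
rewrite fmorph_div rmorph_nat ler_pdivrMr // iax.
by rewrite (gtr0_norm z0) in hn; rewrite mulrC.
Qed.

Lemma ncofB : ~ val_cofinal i -> exists2 z, 0 < z & forall r, 0 < r -> z < i r.
Proof.
move=> /existsNP [y] /not_implyP [y0] /forallNP ny.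
exists `|y|; first by rewrite normr_gt0.
move=> r r0; have ir0 : 0 < i r by rewrite -(rmorph0 i) i_lt.
rewrite ltNge; apply/negP => h; apply: (ny r); split.
  by rewrite lt0r_neq0.
by exists 1%N; rewrite mul1r gtr0_norm.
Qed.

Lemma seteq_le (C : set R) m : is_cut C -> C m -> (forall x, C x -> x <= m) ->
  C = [set x | x <= m].
Proof.
move=> cC Cm hm; apply/seteqP; split=> x /=; first exact: hm.
by move=> xm; apply: cC Cm xm.
Qed.

Lemma seteq_lt (C : set R) m : is_cut C -> ~ C m -> (forall x, ~ C x -> m <= x) ->
  C = [set x | x < m].
Proof.
move=> cC Cm hm; apply/seteqP; split=> x /=.
  move=> Cx; rewrite ltNge; apply/negP => mx; exact: Cm (cC _ _ Cx mx).
move=> xm; apply: contrapT => nC; have := hm x nC; lra.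
Qed.

Lemma ball1 (m : R) : is_ball [set m].
Proof.
exists set0, m; split; first by move=> x y _ _ [].
apply/seteqP; split=> x /=; first by left.
by case=> // -[].
Qed.

Lemma ball1T (m : R) : [set m] <> setT.
Proof.
move=> h; have : [set m] (m + 1) by rewrite h.
rewrite /= => e; clear h; lra.
Qed.

Lemma ball1c (m : R) : ball_complement [set m] [set x | x < m] [set x | m < x].
Proof.
split; first by move=> d b /= ? ->.
split; first by move=> b e /= -> ?.
split; first by move=> d e /= ??; lra.
move=> x /=; case: (ltgtP x m); auto.
Qed.

Lemma cut_up1 (m : R) : [set x | x <= m] = cut_up [set m].
Proof.
apply/seteqP; split=> x /=; first by move=> h; exists m.
by case=> a -> .
Qed.

Lemma cut_down1 (m : R) : [set x | x < m] = cut_down [set m].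
Proof.
apply/seteqP; split=> x /=.
  by move=> h [a ->]; lra.
move=> h; rewrite ltNge; apply/negP => mx; apply: h; by exists m.
Qed.

End Aux.
Unset Implicit Arguments.

Theorem proposition4p6 (R F : realFieldType) (i : {rmorphism R -> F})
  (i_mono : {mono i : x y / x <= y})
  (iota : set R -> set F)
  (H_nonball : forall C : set R, is_cut C -> ~ ball_cut C ->
      iota C = cut_up (i @` C) \/ iota C = cut_down (i @` (~` C)))
  (H_ball : forall (C : set R) (B0 D E : set R),
      is_cut C -> is_ball B0 -> B0 <> setT -> ball_complement B0 D E ->
      (C = cut_down B0 -> iota C = cut_up (i @` D)) /\
      (C = cut_up B0 -> iota C = cut_down (i @` E)))
  (H_empty : iota set0 = cut_down (i @` setT))
  (H_full : iota setT = cut_up (i @` setT)) :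
  (val_cofinal i ->
     forall C : set R, is_cut C -> principal_cut C -> principal_cut (iota C)) /\
  (~ val_cofinal i ->
     forall C : set R, is_cut C -> principal_cut C -> ~ principal_cut (iota C)).
Proof.
have ilt := @i_lt _ _ i i_mono.
have key : forall C, is_cut C -> principal_cut C ->
   exists m, (iota C = cut_down (i @` [set x | m < x])) \/
             (iota C = cut_up (i @` [set x | x < m])).
  move=> C cC [[m [Cm hm]]|[m [Cm hm]]]; exists m.
    left; have e := @seteq_le _ C m cC Cm hm.
    have [_ h] := H_ball C _ _ _ cC (@ball1 _ m) (@ball1T _ m) (@ball1c _ m).
    by apply: h; rewrite e cut_up1.
  right; have e := @seteq_lt _ C m cC Cm hm.
  have [h _] := H_ball C _ _ _ cC (@ball1 _ m) (@ball1T _ m) (@ball1c _ m).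
  by apply: h; rewrite e cut_down1.
split.
- move=> cof C cC pC; have [m [->|->]] := key C cC pC.
  + left; exists (i m); split.
      by case=> _ [x /= mx <-]; rewrite i_mono; lra.
    move=> y hy; rewrite leNgt; apply/negP => my.
    have [r r0 hr] := @cofA _ _ i i_mono cof (y - i m) ltac:(lra).
    apply: hy; exists (i (m + r)); first by exists (m + r) => //=; lra.
    rewrite rmorphD; lra.
  + right; exists (i m); split.
      by case=> _ [x /= mx <-]; rewrite i_mono; lra.
    move=> y hy; rewrite leNgt; apply/negP => my.
    have [r r0 hr] := @cofA _ _ i i_mono cof (i m - y) ltac:(lra).
    apply: hy; exists (i (m - r)); first by exists (m - r) => //=; lra.
    rewrite rmorphB; lra.
- move=> ncof C cC pC; have [z z0 hz] := @ncofB _ _ i i_mono ncof.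
  have [m [->|->]] := key C cC pC.
  +
    have G_iff : forall y, cut_down (i @` [set x | m < x]) y <->
                           (forall x, m < x -> y < i x).
      move=> y; split.
        move=> h x mx; rewrite ltNge; apply/negP => hle; apply: h.
        by exists (i x) => //; exists x.
      by move=> h [_ [x /= mx <-]] hle; have := h x mx; lra.
    case=> [[w [Gw hw]]|[w [Gw hw]]].
    * have Gz : forall x, m < x -> i m + z < i x.
        move=> x mx; have := hz (x - m) ltac:(lra); rewrite rmorphB; lra.
      have wz : i m + z <= w by apply: hw; apply/G_iff.
      have hw' := (proj1 (G_iff w) Gw).
      have : i m + 2 * (w - i m) <= w by apply: hw; apply/G_iff => x mx;
        have := hw' ((m + x) / 2) ltac:(lra); rewrite i_half; lra.
      lra.
    * have [x mx hx] : exists2 x, m < x & i x <= w.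
        apply: contrapT => nh; apply: Gw; apply/G_iff => x mx.
        rewrite ltNge; apply/negP => h; apply: nh; by exists x.
      have ixm : i m < i x by rewrite ilt.
      have : w <= (i m + w) / 2.
        apply: hw => /G_iff h; have := h ((m + x) / 2) ltac:(lra).
        rewrite i_half; lra.
      lra.
  + have G_iff : forall y, cut_up (i @` [set x | x < m]) y <->
                           (exists2 x, x < m & y <= i x).
      move=> y; split.
        by case=> _ [x /= mx <-] h; exists x.
      by case=> x mx h; exists (i x) => //; exists x.
    case=> [[w [Gw hw]]|[w [Gw hw]]].
    * have [x xm hx] := proj1 (G_iff w) Gw.
      have ixm : i x < i m by rewrite ilt.
      have : (i x + i m) / 2 <= w.
        apply: hw; apply/G_iff; exists ((x + m) / 2); first lra.
        by rewrite i_half.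
      lra.
    * have hw' : forall x, x < m -> i x < w.
        move=> x xm; rewrite ltNge; apply/negP => h; apply: Gw; apply/G_iff.
        by exists x.
      have wz : w <= i m - z.
        apply: hw => /G_iff [x xm hx].
        have := hz (m - x) ltac:(lra); rewrite rmorphB; lra.
      have : w <= i m - 2 * (i m - w).
        apply: hw => /G_iff [x xm hx].
        have := hw' ((x + m) / 2) ltac:(lra); rewrite i_half; lra.
      lra.
Qed.
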